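(* Let $p\in(0,1)$, let $X,\gamma$ satisfy the standing assumptions in the context, let $m>0$ and $0\le x_0<m$. Let $q'=\inf\{\mathrm{VaR}_p(g(X)):g\in\mathcal G_{\rm bd}\}$ and assume $q'>0$ and $\mathbb P(\gamma\le\mathrm{VaR}_p(\gamma))=p$. Then the problem of minimizing $\mathrm{VaR}_p(g(X))$ over $g\in\mathcal G_{\rm bd}$ admits a $\mathbb P$-a.s. unique solution, given by $g_X(X)=m\mathds 1_{\{\gamma>c\}}+q'\mathds 1_{\{\gamma\le c\}}$, where $c=\mathrm{VaR}_p(\gamma)$.
   Context: $(\Omega,\mathcal F,\mathbb P)$ is atomless. $\mathrm{VaR}_p(Y)=\inf\{x:\mathbb P(Y\le x)\ge p\}$. Standing assumptions: $X\ge0$ is a random variable whose distribution has a positive density on its support; $\gamma:\mathbb R\to\mathbb R$ is continuous and strictly positive; $\gamma$ also denotes $\gamma(X)$; $\mathbb E[\gamma]=1$, $\mathbb E[\gamma X]<\infty$. With $\mathcal G_1$ the measurable functions $\mathbb R\to\mathbb R$, $\mathcal G_{\rm bd}=\{g\in\mathcal G_1:\mathbb E[\gamma g(X)]\ge x_0,\ 0\le g(X)\le m\}$. *)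

(* Defs.v *)
From HB Require Import structures.
From mathcomp Require Import all_boot all_order all_algebra.
From mathcomp Require Import all_classical all_reals all_analysis.
Set Implicit Arguments. Unset Strict Implicit. Unset Printing Implicit Defensive.
Import Order.TTheory GRing.Theory Num.Theory.
Import numFieldNormedType.Exports.
Local Open Scope classical_set_scope.
Local Open Scope ring_scope.

Definition VaR (d : measure_display) (T : measurableType d) (R : realType)
  (P : probability T R) (p : R) (Y : T -> R) : R :=
  inf [set x : R | (p%:E <= P [set w | (Y w <= x)%R])%E].

Definition atomless (d : measure_display) (T : measurableType d) (R : realType)
  (P : probability T R) : Prop :=
  forall A : set T, measurable A -> (0 < P A)%E ->
    exists B : set T, [/\ measurable B, B `<=` A, (0 < P B)%E & (P B < P A)%E].

Definition dist_support (d : measure_display) (T : measurableType d) (R : realType)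
  (P : probability T R) (X : T -> R) : set R :=
  [set x : R | forall e : R, 0 < e -> (0 < P (X @^-1` `](x - e)%R, (x + e)%R[))%E].

Definition has_pos_density_on_support (d : measure_display) (T : measurableType d)
  (R : realType) (P : probability T R) (X : T -> R) : Prop :=
  exists f : R -> R, [/\ measurable_fun setT f, (forall x, 0 <= f x),
    (forall A : set R, measurable A ->
       P (X @^-1` A) = (\int[@lebesgue_measure R]_(x in A) (f x)%:E)%E)
    & (forall x, dist_support P X x -> 0 < f x)].

Definition Gbd (d : measure_display) (T : measurableType d) (R : realType)
  (P : probability T R) (X : T -> R) (gamma : R -> R) (x0 m : R) : set (R -> R) :=
  [set g : R -> R | [/\ measurable_fun setT g,
     (x0%:E <= \int[P]_w (gamma (X w) * g (X w))%:E)%E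
     & (forall w, (0 <= g (X w) <= m)%R)]].

(* Main.v *)
Require Import Defs.
From HB Require Import structures.
From mathcomp Require Import all_boot all_order all_algebra.
From mathcomp Require Import all_classical all_reals all_analysis.
From mathcomp Require Import ring lra measurable_realfun.
Import Order.TTheory GRing.Theory Num.Theory.
Import numFieldNormedType.Exports.
Local Open Scope classical_set_scope.
Local Open Scope ring_scope.

Lemma mset_le d (T : measurableType d) (R : realType) (Y : T -> R) (x : R) :
  measurable_fun setT Y -> measurable [set w | Y w <= x].
Proof.
move=> mY; have := mY measurableT _ (measurable_itv `]-oo, x]).
rewrite setTI; congr measurable; apply/seteqP; split => w /=; rewrite in_itv /=;
  by move=> ->.
Qed.

Lemma VaR_lb d (T : measurableType d) (R : realType) (P : probability T R) (p : R)
  (Y : T -> R) : 0 < p -> (forall w, 0 <= Y w) ->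
  lbound [set x | (p%:E <= P [set w | (Y w <= x)%R])%E] 0.
Proof.
move=> p0 Y0 x /= Hx; rewrite leNgt; apply/negP => x0.
have E : [set w | Y w <= x] = set0.
  apply/seteqP; split => w //= Hw; have := Y0 w; lra.
by move: Hx; rewrite E measure0 lee_fin; lra.
Qed.

Lemma VaR_le d (T : measurableType d) (R : realType) (P : probability T R) (p : R)
  (Y : T -> R) x : 0 < p -> (forall w, 0 <= Y w) ->
  (p%:E <= P [set w | (Y w <= x)%R])%E -> Defs.VaR P p Y <= x.
Proof.
move=> p0 Y0 Hx; apply: ge_inf => //; exists 0; exact: VaR_lb.
Qed.

Lemma VaR_ge0 d (T : measurableType d) (R : realType) (P : probability T R) (p : R)
  (Y : T -> R) x : 0 < p -> (forall w, 0 <= Y w) ->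
  (p%:E <= P [set w | (Y w <= x)%R])%E -> 0 <= Defs.VaR P p Y.
Proof.
move=> p0 Y0 Hx; apply: lb_le_inf; first by exists x.
exact: VaR_lb.
Qed.

Lemma VaR_attained d (T : measurableType d) (R : realType) (P : probability T R) (p : R)
  (Y : T -> R) x : 0 < p -> measurable_fun setT Y -> (forall w, 0 <= Y w) ->
  (p%:E <= P [set w | (Y w <= x)%R])%E ->
  (p%:E <= P [set w | (Y w <= Defs.VaR P p Y)%R])%E.
Proof.
move=> p0 mY Y0 Hx.
set v := Defs.VaR P p Y.
pose F (n : nat) := [set w | Y w <= v + n.+1%:R^-1].
have mF n : measurable (F n) by exact: mset_le.
have hinf : has_inf [set x | (p%:E <= P [set w | (Y w <= x)%R])%E].
  by split; [exists x | exists 0; exact: VaR_lb].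
have pF n : (p%:E <= P (F n))%E.
  have [e He Hlt] := @inf_adherent R _ (n.+1%:R^-1 : R) (ltac:(by rewrite invr_gt0)) hinf.
  apply: (le_trans He); apply: le_measure; rewrite ?inE//; first exact: mset_le.
  move=> w /= Hw; rewrite /v /Defs.VaR; apply: (le_trans Hw); exact: ltW.
have capE : \bigcap_n F n = [set w | Y w <= v].
  apply/seteqP; split => w /=.
    move=> H; apply/ler_addgt0Pr => e e0.
    set n := Num.Def.trunc (e^-1).
    have := H n I; rewrite /F /= => Hn; apply: (le_trans Hn); rewrite lerD2l.
    have := truncnS_gt (e^-1); rewrite -/n => Hlt.
    rewrite -[e]invrK lef_pV2; [exact: ltW | by rewrite posrE ltr0n | by rewrite posrE invr_gt0].
  move=> Hw n _; rewrite /F /=; apply: (le_trans Hw); rewrite lerDl invr_ge0 ler0n//.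
have mcap : measurable (\bigcap_n F n) by rewrite capE; exact: mset_le.
have := @nonincreasing_cvg_mu _ _ _ P F (ltac:(rewrite (le_lt_trans (probability_le1 _ _)) ?ltry//)) mF mcap.
have nonincF : nonincreasing_seq F.
  move=> n k nk; apply/subsetPset => w; rewrite /F /= => Hw; apply: (le_trans Hw).
  rewrite lerD2l lef_pV2 ?posrE ?ltr0n// ler_nat; exact: nk.
move=> /(_ nonincF) cv.
rewrite -capE -(cvg_lim _ cv)//; apply: lime_ge; first by apply/cvg_ex; eexists; exact: cv.
by apply: nearW => n; exact: pF.
Qed.
Arguments VaR_lb {d T R P p Y}.
Arguments VaR_le {d T R P p Y x}.
Arguments VaR_ge0 {d T R P p Y x}.
Arguments VaR_attained {d T R P p Y x}.

Lemma int_bd d (T : measurableType d) (R : realType) (P : probability T R)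
  (h : T -> R) (K : R) :
  measurable_fun setT h -> (forall w, `|h w| <= K) -> P.-integrable setT (EFin \o h).
Proof.
move=> mh hK; apply: (@le_integrable _ _ _ _ _ measurableT _ (EFin \o cst K)).
- exact/measurable_EFinP.
- move=> w _ /=; rewrite lee_fin; exact: le_trans (hK w) (ler_norm K).
- exact: finite_measure_integrable_cst.
Qed.

Lemma int_gam d (T : measurableType d) (R : realType) (P : probability T R)
  (f h : T -> R) (K : R) : P.-integrable setT (EFin \o f) -> (forall w, 0 <= f w) ->
  measurable_fun setT h -> (forall w, `|h w| <= K) ->
  P.-integrable setT (EFin \o (fun w => f w * h w)).
Proof.
move=> fi f0 mh hK.
have mf : measurable_fun setT f.
  by move/integrableP: fi => [/measurable_EFinP].
apply: (@le_integrable _ _ _ _ _ measurableT _ (fun w => (K%:E * (EFin \o f) w)%E)).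
- by apply/measurable_EFinP; exact: measurable_funM.
- move=> w _ /=; rewrite lee_fin normrM (ger0_norm (f0 w)).
  apply: le_trans (ler_norm _); rewrite mulrC; apply: ler_wpM2r => //.
- exact: integrableZl.
Qed.

Lemma intD d (T : measurableType d) (R : realType) (P : probability T R) (f1 f2 : T -> R) :
  P.-integrable setT (EFin \o f1) -> P.-integrable setT (EFin \o f2) ->
  P.-integrable setT (EFin \o (fun x => f1 x + f2 x)).
Proof. by move=> i1 i2; apply: eq_integrable (integrableD _ i1 i2) => // x _ /=; rewrite EFinD. Qed.

Lemma intB d (T : measurableType d) (R : realType) (P : probability T R) (f1 f2 : T -> R) :
  P.-integrable setT (EFin \o f1) -> P.-integrable setT (EFin \o f2) ->
  P.-integrable setT (EFin \o (fun x => f1 x - f2 x)).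
Proof. by move=> i1 i2; apply: eq_integrable (integrableB _ i1 i2) => // x _ /=; rewrite EFinB. Qed.

Lemma intZ d (T : measurableType d) (R : realType) (P : probability T R) (f : T -> R) (k : R) :
  P.-integrable setT (EFin \o f) ->
  P.-integrable setT (EFin \o (fun x => k * f x)).
Proof. by move=> i; apply: eq_integrable (integrableZl _ k i) => // x _ /=; rewrite EFinM. Qed.

Lemma Rint_indic d (T : measurableType d) (R : realType) (P : probability T R) (A : set T) :
  measurable A -> Rintegral P setT (\1_A) = fine (P A).
Proof. by move=> mA; rewrite /Rintegral integral_indic// setIT. Qed.

Lemma Rint_E d (T : measurableType d) (R : realType) (P : probability T R) (f : T -> R) :
  P.-integrable setT (EFin \o f) -> (\int[P]_w (f w)%:E)%E = (Rintegral P setT f)%:E.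
Proof. by move=> i; rewrite /Rintegral fineK//; exact: integrable_fin_num. Qed.
Arguments intD {d T R P f1 f2}.
Arguments intB {d T R P f1 f2}.
Arguments intZ {d T R P f} k.
Arguments Rint_indic {d T R P A}.

Theorem corollary2 (d : measure_display) (T : measurableType d) (R : realType)
  (P : probability T R) (X : T -> R) (gamma : R -> R) (p m x0 : R) :
  atomless P ->
  measurable_fun setT X ->
  (forall w, 0 <= X w) ->
  has_pos_density_on_support P X ->
  continuous gamma ->
  (forall x, 0 < gamma x) ->
  (\int[P]_w (gamma (X w))%:E = 1%:E)%E ->
  P.-integrable setT (fun w => (gamma (X w) * X w)%:E) ->
  0 < p < 1 ->
  0 < m -> 0 <= x0 -> x0 < m ->
  let q' := inf [set VaR P p (g \o X) | g in Gbd P X gamma x0 m] in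
  let c := VaR P p (gamma \o X) in
  0 < q' ->
  P [set w | gamma (X w) <= c] = p%:E ->
  let gstar := fun x : R => if c < gamma x then m else q' in
  [/\ Gbd P X gamma x0 m gstar,
      (forall g, Gbd P X gamma x0 m g -> VaR P p (gstar \o X) <= VaR P p (g \o X))
    & (forall g, Gbd P X gamma x0 m g ->
         (forall h, Gbd P X gamma x0 m h -> VaR P p (g \o X) <= VaR P p (h \o X)) ->
         {ae P, forall w, g (X w) = gstar (X w)})].
Proof.
move=> _ mX X0 _ cgam gpos Eg1 _ /andP[p0 p1] m0 x00 x0m q' c q'0 PB gstar.
have mgam : measurable_fun setT gamma := continuous_measurable_fun cgam.
have mgX : measurable_fun setT (gamma \o X) := measurableT_comp mgam mX.
have igX : P.-integrable setT (EFin \o (gamma \o X)).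
  apply/integrableP; split; first exact/measurable_EFinP.
  rewrite (eq_integral (fun w => (gamma (X w))%:E)); first by rewrite Eg1 ltry.
  by move=> w _ /=; rewrite ger0_norm// ltW.
have RgX : Rintegral P setT (gamma \o X) = 1 by rewrite /Rintegral /= Eg1.
pose B := [set w | gamma (X w) <= c].
have mB : measurable B := @mset_le _ _ _ (gamma \o X) c mgX.
have inB w : (w \in B) = (gamma (X w) <= c) by apply/idP/idP; rewrite in_setE.
have c0 : 0 <= c.
  rewrite leNgt; apply/negP => c0.
  have : B = set0.
    apply/seteqP; split => w //=; rewrite /B /= => Hw; have := gpos (X w).
    lra.
  by move=> B0; move: PB; rewrite -/B B0 measure0 => -[]; lra.
have hB w : `|\1_B w| <= 1 :> R by rewrite indicE; case: (w \in B); rewrite normr_nat.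
have iB : P.-integrable setT (EFin \o (fun w => gamma (X w) * \1_B w)).
  apply: (@int_gam _ _ _ P (gamma \o X) (\1_B) 1 igX) => // w; exact/ltW/gpos.
pose beta := Rintegral P setT (fun w => gamma (X w) * \1_B w).
have beta0 : 0 <= beta.
  by apply: Rintegral_ge0 => w _; rewrite mulr_ge0 ?indicE ?ler0n // ltW.
have beta1 : beta <= 1.
  rewrite -RgX; apply: le_Rintegral => // w _ /=.
  by rewrite indicE; case: (w \in B); rewrite ?mulr1 ?mulr0 // ltW.
pose G (v : R) := fun x : R => if c < gamma x then m else v.
have GE v w : G v (X w) = m - (m - v) * \1_B w.
  rewrite /G indicE inB; case: ltP => _ /=; lra.
have mG v : measurable_fun setT (G v).
  rewrite (_ : G v = fun x => m - (m - v) * \1_[set x | gamma x <= c] x).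
    apply: measurable_funB; first exact: measurable_cst.
    apply: measurable_funM; first exact: measurable_cst.
    apply: measurable_indic; exact: (@mset_le _ _ _ gamma c mgam).
  apply/funext => x; rewrite /G indicE.
  have -> : (x \in [set x | gamma x <= c]) = (gamma x <= c) by apply/idP/idP; rewrite in_setE.
  case: ltP => _ /=; lra.
have GG v : 0 <= v <= m -> forall w, 0 <= G v (X w) <= m.
  by move=> /andP[v0 vm] w; rewrite /G; case: ltP => _; apply/andP; lra.
have iG v : 0 <= v <= m -> P.-integrable setT (EFin \o (fun w => gamma (X w) * G v (X w))).
  move=> vm; apply: (@int_gam _ _ _ P (gamma \o X) (G v \o X) m igX) => //.
  - by move=> w; exact/ltW/gpos.
  - exact: measurableT_comp.
  - by move=> w /=; have /andP[h1 h2] := GG v vm w; rewrite ger0_norm.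
have RG v : Rintegral P setT (fun w => gamma (X w) * G v (X w)) = m - (m - v) * beta.
  rewrite (@eq_Rintegral _ _ _ P setT (fun w => m * (gamma \o X) w - (m - v) * (gamma (X w) * \1_B w))); last first.
    by move=> w _; rewrite GE /=; ring.
  rewrite RintegralB //; first last.
  - exact: intZ.
  - exact: intZ.
  by rewrite RintegralZl // RintegralZl // RgX mulr1.
have VaRG v : 0 <= v -> VaR P p (G v \o X) <= v.
  move=> v0; apply: VaR_le => //.
    by move=> w /=; rewrite /G; case: ltP => _; lra.
  rewrite -PB; apply: le_measure; rewrite ?inE //.
    by apply: (@mset_le _ _ _ (G v \o X)); exact: measurableT_comp.
  by move=> w /= hw; rewrite /G ltNge hw.
have GinGbd v : 0 <= v <= m -> x0 <= m - (m - v) * beta -> Gbd P X gamma x0 m (G v).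
  move=> vm hx; split => //; last exact: GG.
  by rewrite (@Rint_E _ _ _ P _ (iG v vm)) lee_fin RG.
have gfacts g : Gbd P X gamma x0 m g ->
    [/\ measurable_fun setT (g \o X), (forall w, 0 <= g (X w) <= m)
       & (p%:E <= P [set w | (g (X w) <= m)%R])%E].
  case=> mg _ gb; split => //; first exact: measurableT_comp.
  rewrite (_ : [set w | _] = setT) ?probability_setT ?lee_fin ?ltW //.
  by apply/seteqP; split => w //= _; have /andP[] := gb w.
have VaRg g : Gbd P X gamma x0 m g ->
    [/\ 0 <= VaR P p (g \o X), VaR P p (g \o X) <= m &
       (p%:E <= P [set w | (g (X w) <= VaR P p (g \o X))%R])%E].
  move=> Hg; have [mg gb Hm] := gfacts g Hg.
  have g0 : forall w, 0 <= (g \o X) w by move=> w; have /andP[] := gb w.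
  split.
  - exact: (VaR_ge0 p0 g0 Hm).
  - exact: (VaR_le p0 g0 Hm).
  - exact: (VaR_attained p0 mg g0 Hm).
pose I := [set VaR P p (g \o X) | g in Gbd P X gamma x0 m].
have Ilb : lbound I 0 by move=> y [g Hg <-]; have [] := VaRg g Hg.
have hasI : has_lbound I by exists 0.
have Gx0 : Gbd P X gamma x0 m (G x0).
  apply: GinGbd; first by apply/andP; lra.
  have : (m - x0) * beta <= m - x0 by rewrite ler_piMr //; lra.
  lra.
have Inon : nonempty I by exists (VaR P p (G x0 \o X)); exists (G x0).
have q'le g : Gbd P X gamma x0 m g -> q' <= VaR P p (g \o X).
  by move=> Hg; apply: (ge_inf hasI); exists g.
have q'x0 : q' <= x0 := le_trans (q'le _ Gx0) (VaRG x0 x00).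
pose A (g : R -> R) (v : R) := [set w | (g (X w) <= v)%R].
pose D (g : R -> R) (v : R) (w : T) := gamma (X w) * G v (X w) + (m - v) * c * \1_B w
   - gamma (X w) * g (X w) - (m - v) * c * \1_(A g v) w.
have key g v : Gbd P X gamma x0 m g -> 0 <= v <= m ->
  [/\ forall w, 0 <= D g v w, P.-integrable setT (EFin \o D g v) &
      Rintegral P setT (D g v) = (m - (m - v) * beta) + (m - v) * c * p
        - Rintegral P setT (fun w => gamma (X w) * g (X w)) - (m - v) * c * fine (P (A g v))].
  move=> Hg vm; have [mgX' gb _] := gfacts g Hg.
  have mA : measurable (A g v) := @mset_le _ _ _ (g \o X) v mgX'.
  have hI (S : set T) w : `|\1_S w| <= 1 :> R by rewrite indicE; case: (w \in S); rewrite normr_nat.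
  have iA : P.-integrable setT (EFin \o (\1_(A g v))).
    by apply: (@int_bd _ _ _ P _ 1) => //; exact: measurable_indic.
  have iBB : P.-integrable setT (EFin \o (\1_B)).
    by apply: (@int_bd _ _ _ P _ 1) => //; exact: measurable_indic.
  have ig : P.-integrable setT (EFin \o (fun w => gamma (X w) * g (X w))).
    apply: (@int_gam _ _ _ P (gamma \o X) (g \o X) m igX) => //.
    - by move=> w; exact/ltW/gpos.
    - by move=> w /=; have /andP[h1 h2] := gb w; rewrite ger0_norm.
  have iD1 := intD (iG v vm) (intZ ((m - v) * c) iBB).
  have iD2 := intB iD1 ig.
  have iD3 := intB iD2 (intZ ((m - v) * c) iA).
  split.
  - move=> w; rewrite /D GE !indicE inB.
    have -> : (w \in A g v) = (g (X w) <= v) by apply/idP/idP; rewrite in_setE.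
    have /andP[g0 gm] := gb w; have /andP[v0 vm'] := vm; have gp := gpos (X w).
    case: (leP (gamma (X w)) c) => hc; case: (leP (g (X w)) v) => hg;
      rewrite /= ?mulr1 ?mulr0 ?subr0 ?addr0.
    + have : 0 <= gamma (X w) * (v - g (X w)) by rewrite mulr_ge0 ?subr_ge0 // ltW.
      lra.
    + have h1 : 0 <= (m - g (X w)) * gamma (X w) by rewrite mulr_ge0 ?subr_ge0 // ltW.
      have h2 : 0 <= (m - v) * (c - gamma (X w)) by rewrite mulr_ge0 ?subr_ge0.
      nra.
    + have h1 : 0 <= (v - g (X w)) * gamma (X w) by rewrite mulr_ge0 ?subr_ge0 // ltW.
      have h2 : 0 <= (m - v) * (gamma (X w) - c) by rewrite mulr_ge0 ?subr_ge0 // ltW.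
      nra.
    + have h1 : 0 <= (m - g (X w)) * gamma (X w) by rewrite mulr_ge0 ?subr_ge0 // ltW.
      nra.
  - exact: iD3.
  - rewrite /D (RintegralB measurableT iD2 (intZ _ iA)) (RintegralB measurableT iD1 ig).
    rewrite (RintegralD measurableT (iG v vm) (intZ _ iBB)) RintegralZl // RintegralZl //.
    by rewrite !Rint_indic // RG /B PB.
have xg g : Gbd P X gamma x0 m g -> x0 <= Rintegral P setT (fun w => gamma (X w) * g (X w)).
  move=> Hg; have [_ gb _] := gfacts g Hg; have [_ hx _] := Hg.
  have ig : P.-integrable setT (EFin \o (fun w => gamma (X w) * g (X w))).
    apply: (@int_gam _ _ _ P (gamma \o X) (g \o X) m igX) => //.
    - by move=> w; exact/ltW/gpos.
    - by have [] := gfacts g Hg.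
    - by move=> w /=; have /andP[h1 h2] := gb w; rewrite ger0_norm.
  by move: hx; rewrite (@Rint_E _ _ _ P _ ig) lee_fin.
have finA g v : Gbd P X gamma x0 m g -> P (A g v) = (fine (P (A g v)))%:E.
  move=> Hg; have [mg _ _] := gfacts g Hg.
  by rewrite fineK //; apply: fin_num_measure; exact: (@mset_le _ _ _ (g \o X) v mg).
have ineq g : Gbd P X gamma x0 m g -> x0 <= m - (m - VaR P p (g \o X)) * beta.
  move=> Hg; have [v0 vm PA] := VaRg g Hg.
  set v := VaR P p (g \o X) in v0 vm PA *.
  have [Dge0 iD RD] := key g v Hg (ltac:(by apply/andP)).
  have hx := xg g Hg.
  have PAf : p <= fine (P (A g v)) by rewrite -lee_fin -finA.
  have RD0 : 0 <= Rintegral P setT (D g v) by apply: Rintegral_ge0 => w _; exact: Dge0.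
  have h1 : 0 <= (m - v) * c * (fine (P (A g v)) - p) by rewrite !mulr_ge0 ?subr_ge0.
  nra.
have q'feas : x0 <= m - (m - q') * beta.
  have [b0|bn0] := eqVneq beta 0; first by rewrite b0 mulr0 subr0; lra.
  have bpos : 0 < beta by rewrite lt_neqAle eq_sym bn0 beta0.
  pose L := m - (m - x0) / beta.
  have LI : lbound I L.
    move=> y [g Hg <-]; have := ineq g Hg; set y' := VaR P p (g \o X) => h.
    have : m - y' <= (m - x0) / beta by rewrite ler_pdivlMr //; lra.
    rewrite /L; lra.
  have : L <= q' by exact: lb_le_inf Inon LI.
  rewrite /L => h.
  have : m - q' <= (m - x0) / beta by lra.
  rewrite ler_pdivlMr //; lra.
have Gq : Gbd P X gamma x0 m gstar.
  by apply: (GinGbd q') => //; apply/andP; lra.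
split => //.
  by move=> g Hg; apply: le_trans (VaRG q' (ltW q'0)) (q'le g Hg).
move=> g Hg opt.
have [v0 vm PA] := VaRg g Hg.
have vq : VaR P p (g \o X) = q'.
  apply/le_anti/andP; split; last exact: q'le.
  exact: le_trans (opt _ Gq) (VaRG q' (ltW q'0)).
rewrite vq in PA.
have qmin : m - (m - q') * beta <= x0.
  rewrite leNgt; apply/negP => hlt.
  pose s := m - (m - q') * beta - x0.
  have s0 : 0 < s by rewrite /s; lra.
  pose t := s / (beta + 1).
  have ht : t * (beta + 1) = s by rewrite /t divfK // gt_eqF //; lra.
  have t0 : 0 < t by rewrite /t divr_gt0 //; lra.
  have [qq [qq0 qqlt qqfeas]] : exists qq, [/\ 0 <= qq, qq < q' & x0 <= m - (m - qq) * beta].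
    case: (leP 0 (q' - t)) => h.
    - exists (q' - t); split => //; first lra.
      have : m - (m - (q' - t)) * beta = x0 + s - t * beta by rewrite /s; ring.
      nra.
    - exists 0; split => //.
      have : q' * beta <= t * beta by rewrite ler_wpM2r //; lra.
      have : m - (m - 0) * beta = x0 + s - q' * beta by rewrite /s; ring.
      nra.
  have Gqq : Gbd P X gamma x0 m (G qq) by apply: GinGbd => //; apply/andP; lra.
  have := le_trans (q'le _ Gqq) (VaRG qq qq0); lra.
have [Dge0 iD RD] := key g q' Hg (ltac:(apply/andP; lra)).
have hx := xg g Hg.
have PAf : p <= fine (P (A g q')) by rewrite -lee_fin -finA.
have RD0 : Rintegral P setT (D g q') = 0.
  apply/le_anti/andP; split; last by apply: Rintegral_ge0 => w _; exact: Dge0.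
  have h1 : 0 <= (m - q') * c * (fine (P (A g q')) - p) by rewrite !mulr_ge0 ?subr_ge0 //; lra.
  nra.
have mD : measurable_fun setT (EFin \o D g q') by case/integrableP: iD.
have hint : (\int[P]_(x in setT) `|(EFin \o D g q') x| = 0)%E.
  rewrite (eq_integral (fun x => (D g q' x)%:E)); last by move=> w _ /=; rewrite ger0_norm.
  by rewrite (@Rint_E _ _ _ P _ iD) RD0.
have [N [mN PN0 subN]] := (ae_eq_integral_abs P measurableT mD).1 hint.
have Dz w : ~ N w -> D g q' w = 0.
  move=> nN; apply: contra_notP nN => hD; apply: subN => /= H; apply: hD.
  by have := H Logic.I => -[].
have [mg _ _] := gfacts g Hg.
have mA : measurable (A g q') := @mset_le _ _ _ (g \o X) q' mg.
have inA w : (w \in A g q') = (g (X w) <= q') by apply/idP/idP; rewrite in_setE.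
have [_ gb _] := gfacts g Hg.
have AB_sub : (A g q' `\` B) `<=` N.
  move=> w [hA nB]; apply: contrapT => nN; have := Dz w nN.
  have hc : c < gamma (X w) by rewrite ltNge; apply/negP => H; exact: nB H.
  rewrite /D GE !indicE inB inA (lt_geF hc) /=.
  rewrite (_ : g (X w) <= q' = true) /=; last exact: hA.
  rewrite !mulr0 !mulr1 subr0 addr0.
  have /andP[g0 gm] := gb w.
  have h1 : 0 < (m - q') * (gamma (X w) - c) by rewrite mulr_gt0 ?subr_gt0 //; lra.
  have h2 : 0 <= gamma (X w) * (q' - g (X w)) by rewrite mulr_ge0 ?subr_ge0 // ltW.
  nra.
have PAB : P (A g q' `\` B) = 0.
  apply/eqP; rewrite -measure_le0 -PN0; apply: le_measure; rewrite ?inE //.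
  exact: measurableD.
have PBA : P (B `\` A g q') = 0.
  have h1 : P (A g q') = (P (A g q' `\` B) + P (A g q' `&` B))%E := measureDI P mA mB.
  have h2 : P B = (P (B `\` A g q') + P (B `&` A g q'))%E := measureDI P mB mA.
  rewrite PAB add0e in h1; rewrite setIC -h1 /B PB in h2.
  have fBA : P (B `\` A g q') = (fine (P (B `\` A g q')))%:E.
    by rewrite fineK //; apply: fin_num_measure; exact: measurableD.
  have fge : 0 <= fine (P (B `\` A g q')) by apply: fine_ge0.
  rewrite fBA (finA g q' Hg) -EFinD in h2; move: h2 => -[] hp.
  rewrite fBA; congr EFin; lra.
exists (N `|` (B `\` A g q')); split.
- by apply: measurableU => //; exact: measurableD.
- apply/eqP; rewrite -measure_le0.
  have h : (P (N `|` (B `\` A g q')) <= P N + P (B `\` A g q'))%E := measureU2 P mN (measurableD mB mA).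
  by apply: le_trans h _; rewrite PN0 PBA adde0.
move=> w /= hne; apply: contrapT => hn.
have nN : ~ N w by move=> H; apply: hn; left.
have nBA : ~ (B w /\ ~ A g q' w) by move=> H; apply: hn; right.
have Dw := Dz w nN; apply: hne; move: Dw.
clear PAB PBA PN0 hint subN.
rewrite /D /gstar GE !indicE inB inA.
have /andP[g0 gm] := gb w; have gp := gpos (X w).
case: (leP (gamma (X w)) c) => hc; case: (leP (g (X w)) q') => hg;
  rewrite /= ?mulr1 ?mulr0 ?subr0 ?addr0 => h.
- have e : gamma (X w) * (q' - g (X w)) = 0 by rewrite -h; ring.
  move/eqP: e; rewrite mulf_eq0 => /orP[/eqP H0|/eqP H0]; first by move: gp; rewrite H0 ltxx.
  by apply/eqP; rewrite eq_sym -subr_eq0 H0.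
- exfalso; apply: nBA; split; first exact: hc.
  by rewrite /A /= leNgt hg.
- exfalso.
  have h1 : 0 < (m - q') * (gamma (X w) - c) by rewrite mulr_gt0 ?subr_gt0 //; lra.
  have h2 : 0 <= gamma (X w) * (q' - g (X w)) by rewrite mulr_ge0 ?subr_ge0 // ltW.
  have : 0 < gamma (X w) * m - gamma (X w) * g (X w) - (m - q') * c.
    have -> : gamma (X w) * m - gamma (X w) * g (X w) - (m - q') * c =
      (m - q') * (gamma (X w) - c) + gamma (X w) * (q' - g (X w)) by ring.
    by apply: (lt_le_trans h1); rewrite lerDl.
  by rewrite h ltxx.
- have e : gamma (X w) * (m - g (X w)) = 0 by rewrite -h; ring.
  move/eqP: e; rewrite mulf_eq0 => /orP[/eqP H0|/eqP H0]; first by move: gp; rewrite H0 ltxx.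
  by apply/eqP; rewrite eq_sym -subr_eq0 H0.
Qed.
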